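(* Let $d\ge2$ be an integer, let $D_1,\dots,D_d$ be real constants, $D=\sum_iD_i$, and let $\lambda<\pi^2/d$. Let $L=(L_1,\dots,L_d)\in C^1([0,1];\mathbb{R}^d)$ be the unique solution of $$L_i'=-\Big(\sum_{k=1}^dL_k\Big)L_i-\lambda\ \text{ on }[0,1],\qquad\int_0^1L_i(r)\,dr=D_i\qquad(i=1,\dots,d).$$ If moreover $$(d-1)\lambda=\sum_{i=1}^dL_i(0)^2-\Big(\sum_{i=1}^dL_i(0)\Big)^2,$$ then $\lambda\in[-D^2/d,\pi^2/d)$. *)

(* Defs.v *)
From Stdlib Require Import Reals List.
From Coquelicot Require Import Coquelicot.
Open Scope R_scope.

Definition sumR (d : nat) (f : nat -> R) : R :=
  fold_right Rplus 0 (map f (seq 0 d)).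

Definition cont_in01 (f : R -> R) (x : R) : Prop :=
  filterlim f (within (fun y => 0 <= y <= 1) (locally x)) (locally (f x)).

(* Main.v *)
Require Import Defs.
From Stdlib Require Import Reals List Lra Lia Psatz.
From Coquelicot Require Import Coquelicot.
Open Scope R_scope.

Definition sumL (l : list nat) (f : nat -> R) := fold_right Rplus 0 (map f l).

Lemma sumL_ext l f g : (forall i, In i l -> f i = g i) -> sumL l f = sumL l g.
Proof. induction l as [|a l IH]; intros H; simpl; auto.
  unfold sumL in *; simpl. rewrite H by (left; auto). rewrite IH; auto.
  intros; apply H; right; auto. Qed.

Lemma sumL_plus l f g : sumL l (fun i => f i + g i) = sumL l f + sumL l g.
Proof. induction l; unfold sumL in *; simpl; [lra|]. rewrite IHl. ring. Qed.

Lemma sumL_scal l c f : sumL l (fun i => c * f i) = c * sumL l f.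
Proof. induction l; unfold sumL in *; simpl; [ring|]. rewrite IHl. ring. Qed.

Lemma sumL_const l c : sumL l (fun _ => c) = INR (length l) * c.
Proof. induction l; [unfold sumL; simpl; ring|].
  change (length (a::l)) with (S (length l)). rewrite S_INR.
  unfold sumL in *; simpl. rewrite IHl. ring. Qed.

Lemma sumL_nonneg l f : (forall i, 0 <= f i) -> 0 <= sumL l f.
Proof. intros H; induction l; unfold sumL in *; simpl; [lra|]. specialize (H a); lra. Qed.

Lemma sumL_derive l (f df : nat -> R -> R) x :
  (forall i, In i l -> is_derive (f i) x (df i x)) ->
  is_derive (fun y => sumL l (fun i => f i y)) x (sumL l (fun i => df i x)).
Proof. induction l as [|a l IH]; intros H; unfold sumL in *; simpl.
  - apply (is_derive_const (V:=R_NormedModule) 0 x).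
  - apply (is_derive_plus (fun y => f a y) (fun y => fold_right Rplus 0 (map (fun i => f i y) l))).
    + apply H; left; auto.
    + apply IH; intros; apply H; right; auto.
Qed.

Lemma sumL_cont l (f : nat -> R -> R) x :
  (forall i, In i l -> continuous (f i) x) ->
  continuous (fun y => sumL l (fun i => f i y)) x.
Proof. induction l as [|a l IH]; intros H; unfold sumL in *; simpl.
  - apply continuous_const.
  - apply (continuous_plus (fun y => f a y) (fun y => fold_right Rplus 0 (map (fun i => f i y) l))).
    + apply H; left; auto.
    + apply IH; intros; apply H; right; auto.
Qed.

Lemma sumL_RInt l (f : nat -> R -> R) v a b :
  (forall i, In i l -> is_RInt (f i) a b (v i)) ->
  is_RInt (fun y => sumL l (fun i => f i y)) a b (sumL l v).
Proof. induction l as [|a0 l IH]; intros H; unfold sumL in *; simpl.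
  - assert (E : scal (b - a) (zero : R_NormedModule) = 0) by (unfold scal, zero; simpl; unfold mult; simpl; ring).
    pose proof (is_RInt_const (V:=R_NormedModule) a b zero) as K; rewrite E in K; exact K.
  - apply (is_RInt_plus (fun y => f a0 y) (fun y => fold_right Rplus 0 (map (fun i => f i y) l))).
    + apply H; left; auto.
    + apply IH; intros; apply H; right; auto.
Qed.

Lemma CS d (x : nat -> R) : (0 < d)%nat ->
  (sumR d x)^2 <= INR d * sumR d (fun i => x i ^ 2).
Proof. intros Hd. change (sumR d x) with (sumL (seq 0 d) x).
  change (sumR d (fun i => x i ^ 2)) with (sumL (seq 0 d) (fun i => x i ^ 2)).
  set (Sx := sumL (seq 0 d) x). set (Q := sumL (seq 0 d) (fun i => x i ^ 2)).
  assert (Hd' : 0 < INR d) by (apply lt_0_INR; lia).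
  set (m := Sx / INR d).
  assert (H0 : 0 <= sumL (seq 0 d) (fun i => (x i - m)^2)).
  { apply sumL_nonneg; intros; apply pow2_ge_0. }
  rewrite (sumL_ext _ _ (fun i => (x i ^ 2 + (-2*m) * x i) + m^2)) in H0
    by (intros; ring).
  rewrite sumL_plus, sumL_plus, sumL_scal, sumL_const, length_seq in H0.
  fold Sx Q in H0. unfold m in H0.
  assert (E : Q + -2 * (Sx / INR d) * Sx + INR d * (Sx / INR d)^2 = Q - Sx^2 / INR d) by (field; lra).
  rewrite E in H0.
  apply Rmult_le_compat_l with (r := INR d) in H0; [|lra].
  assert (E2 : INR d * (Q - Sx^2/INR d) = INR d * Q - Sx^2) by (field; lra).
  lra.
Qed.

Definition clamp (x : R) := Rmax 0 (Rmin 1 x).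
Lemma clamp_in x : 0 <= clamp x <= 1.
Proof. unfold clamp, Rmax, Rmin; repeat destruct Rle_dec; lra. Qed.
Lemma clamp_id x : 0 <= x <= 1 -> clamp x = x.
Proof. unfold clamp, Rmax, Rmin; repeat destruct Rle_dec; lra. Qed.
Lemma clamp_lip x y : Rabs (clamp y - clamp x) <= Rabs (y - x).
Proof. unfold clamp, Rmax, Rmin; repeat destruct Rle_dec; split_Rabs; lra. Qed.

Lemma cont_clamp f x : cont_in01 f (clamp x) -> continuous (fun y => f (clamp y)) x.
Proof. intros H P HP. specialize (H P HP). destruct H as [eps He].
  exists eps. intros y Hy. apply He.
  - unfold ball in *; simpl in *; unfold AbsRing_ball in *; simpl in *.
    unfold abs, minus, plus, opp in *; simpl in *.
    eapply Rle_lt_trans; [apply clamp_lip|exact Hy].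
  - apply clamp_in.
Qed.

Lemma cont_sq (f : R -> R) x : continuous f x -> continuous (fun y => f y ^ 2) x.
Proof. intros H. apply (continuous_comp f (fun z => z^2)); auto.
  apply (ex_derive_continuous (fun z : R => z^2)). auto_derive; auto. Qed.

Lemma cont_minusR (f g : R -> R) x : continuous f x -> continuous g x -> continuous (fun y => f y - g y) x.
Proof. intros; exact (continuous_minus f g x H H0). Qed.

Lemma cont_multR (f g : R -> R) x : continuous f x -> continuous g x -> continuous (fun y => f y * g y) x.
Proof. intros; exact (continuous_mult f g x H H0). Qed.

Lemma is_derive_eq (f : R -> R) x l l' : is_derive f x l -> l = l' -> is_derive f x l'.
Proof. intros H E; rewrite <- E; exact H. Qed.

Lemma loc_int r : 0 < r < 1 -> locally r (fun t => 0 < t < 1).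
Proof. intros Hr. assert (Hp : 0 < Rmin r (1 - r)) by (apply Rmin_pos; lra).
  exists (mkposreal _ Hp). intros y Hy.
  unfold ball in Hy; simpl in Hy; unfold AbsRing_ball, abs, minus, plus, opp in Hy; simpl in Hy.
  unfold Rmin in Hy; destruct Rle_dec; split_Rabs; lra. Qed.

Theorem lemma3p3 (d : nat) (Dc : nat -> R) (lam : R) (L : nat -> R -> R)
  (hd : (2 <= d)%nat)
  (hlam : lam < PI ^ 2 / INR d)
  (hcont : forall i, (i < d)%nat -> forall r, 0 <= r <= 1 -> cont_in01 (L i) r)
  (hode : forall i, (i < d)%nat -> forall r, 0 < r < 1 ->
      is_derive (L i) r (- (sumR d (fun k => L k r)) * L i r - lam))
  (hint : forall i, (i < d)%nat -> RInt (L i) 0 1 = Dc i)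
  (hcond : (INR d - 1) * lam =
      sumR d (fun i => (L i 0) ^ 2) - (sumR d (fun i => L i 0)) ^ 2) :
  - (sumR d Dc) ^ 2 / INR d <= lam /\ lam < PI ^ 2 / INR d.
Proof.
  split; [|exact hlam].
  assert (Hd0 : 0 < INR d) by (apply lt_0_INR; lia).
  assert (Hd1 : 1 < INR d) by (apply lt_1_INR; lia).
  pose (S := fun y => sumR d (fun k => L k y)).
  pose (Q := fun y => sumR d (fun k => L k y ^ 2)).
  pose (St := fun y => S (clamp y)).
  assert (inseq : forall i, In i (seq 0 d) -> (i < d)%nat) by (intros i Hi; apply in_seq in Hi; lia).
  assert (contLt : forall i, (i < d)%nat -> forall x, continuous (fun y => L i (clamp y)) x).
  { intros i Hi x. apply cont_clamp. apply hcont; auto; apply clamp_in. }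
  assert (contSt : forall x, continuous St x).
  { intros x. exact (sumL_cont (seq 0 d) (fun k y => L k (clamp y)) x (fun i Hi => contLt i (inseq i Hi) x)). }
  assert (intSt : is_RInt St 0 1 (sumR d Dc)).
  { apply (sumL_RInt (seq 0 d) (fun k y => L k (clamp y)) Dc 0 1).
    intros i Hi. apply inseq in Hi.
    assert (exI : ex_RInt (fun y => L i (clamp y)) 0 1) by (apply (ex_RInt_continuous (V:=R_CompleteNormedModule)); intros; apply contLt; auto).
    rewrite <- (hint i Hi).
    replace (RInt (L i) 0 1) with (RInt (fun y => L i (clamp y)) 0 1).
    - apply (RInt_correct (V:=R_CompleteNormedModule)); auto.
    - apply RInt_ext. intros x Hx. rewrite Rmin_left, Rmax_right in Hx by lra. rewrite clamp_id by lra. auto. }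
  pose (H := fun y => RInt St 0 y).
  assert (dH : forall x, is_derive H x (St x)).
  { intros x. apply (is_derive_RInt (V:=R_NormedModule) St H 0 x). apply filter_forall. intros b. apply (RInt_correct (V:=R_CompleteNormedModule)).
    apply (ex_RInt_continuous (V:=R_CompleteNormedModule)). intros; apply contSt. apply contSt. }
  pose (G := fun y => Q y - S y ^ 2 - (INR d - 1) * lam).
  assert (dG : forall r, 0 < r < 1 -> is_derive G r (-2 * S r * G r)).
  { intros r Hr.
    assert (dL : forall i, In i (seq 0 d) -> is_derive (L i) r (- S r * L i r - lam)) by (intros i Hi; apply hode; auto).
    assert (dS : is_derive S r (sumL (seq 0 d) (fun i => - S r * L i r - lam))).
    { exact (sumL_derive (seq 0 d) L (fun i y => - S r * L i y - lam) r dL). }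
    assert (dQ : is_derive Q r (sumL (seq 0 d) (fun i => 2 * (- S r * L i r - lam) * L i r))).
    { apply (sumL_derive (seq 0 d) (fun i y => L i y ^ 2) (fun i y => 2 * (- S r * L i r - lam) * L i y) r).
      intros i Hi. pose proof (is_derive_pow (L i) 2 r _ (dL i Hi)) as K.
      eapply is_derive_eq; [exact K|]. simpl; ring. }
    assert (E1 : sumL (seq 0 d) (fun i => - S r * L i r - lam) = - S r * S r - INR d * lam).
    { rewrite (sumL_ext _ _ (fun i => (-S r) * L i r + (-lam))) by (intros; ring).
      rewrite sumL_plus, sumL_scal, sumL_const, length_seq.
      change (sumL (seq 0 d) (fun i => L i r)) with (S r). ring. }
    assert (E2 : sumL (seq 0 d) (fun i => 2 * (- S r * L i r - lam) * L i r) = -2 * S r * Q r - 2 * lam * S r).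
    { rewrite (sumL_ext _ _ (fun i => (-2 * S r) * (L i r ^ 2) + (-2 * lam) * L i r)) by (intros; ring).
      rewrite sumL_plus, sumL_scal, sumL_scal.
      change (sumL (seq 0 d) (fun i => L i r)) with (S r).
      change (sumL (seq 0 d) (fun i => L i r ^ 2)) with (Q r). ring. }
    rewrite E1 in dS. rewrite E2 in dQ.
    pose proof (is_derive_pow S 2 r _ dS) as dS2.
    pose proof (is_derive_minus _ _ r _ _ dQ dS2) as K1.
    pose proof (is_derive_minus _ _ r _ _ K1 (is_derive_const (V:=R_NormedModule) ((INR d - 1) * lam) r)) as K2.
    eapply is_derive_eq; [eapply is_derive_ext; [|exact K2]|].
    - intros t. unfold G, minus, plus, opp; simpl. ring.
    - unfold G, minus, plus, opp, zero; simpl. ring. }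
  assert (G0 : G 0 = 0). { unfold G, S, Q. rewrite hcond. ring. }
  assert (contG : forall x, continuous (fun y => G (clamp y)) x).
  { intros x. unfold G. apply cont_minusR; [apply cont_minusR|apply continuous_const].
    - exact (sumL_cont (seq 0 d) (fun k y => L k (clamp y) ^ 2) x (fun i Hi => cont_sq _ x (contLt i (inseq i Hi) x))).
    - apply cont_sq. apply contSt. }
  pose (phi := fun y => G (clamp y) * exp (2 * H y)).
  assert (contE : forall x, continuous (fun y => exp (2 * H y)) x).
  { intros x. apply (continuous_comp (fun y => 2 * H y) exp).
    - apply (ex_derive_continuous (K:=R_AbsRing) (V:=R_NormedModule)). exists (2 * St x). apply is_derive_scal. apply dH.
    - apply (ex_derive_continuous exp). auto_derive; auto. }
  assert (contphi : forall x, continuous phi x) by (intros; apply cont_multR; auto).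
  assert (dphi : forall r, 0 < r < 1 -> is_derive phi r 0).
  { intros r Hr.
    assert (dGc : is_derive (fun y => G (clamp y)) r (-2 * S r * G r)).
    { apply is_derive_ext_loc with (f := G); [|apply dG; auto].
      eapply filter_imp; [|apply loc_int; exact Hr]. intros t Ht. rewrite clamp_id by lra. auto. }
    assert (dE : is_derive (fun y => exp (2 * H y)) r (2 * St r * exp (2 * H r))).
    { pose proof (is_derive_comp exp (fun y => 2 * H y) r _ _ (is_derive_exp (2 * H r)) (is_derive_scal _ r 2 _ (dH r))) as K.
      eapply is_derive_eq; [exact K|]. unfold scal; simpl; unfold mult; simpl. ring. }
    pose proof (is_derive_mult _ _ r _ _ dGc dE) as K.
    eapply is_derive_eq; [apply K; intros; apply Rmult_comm|].
    unfold St. rewrite clamp_id by lra. unfold plus, mult; simpl. ring. }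
  assert (Gz : forall r, 0 <= r <= 1 -> G r = 0).
  { intros r Hr. destruct (Req_dec r 0) as [->|Hr0]; auto.
    pose proof (MVT_gen phi 0 r (fun _ => 0)) as K. cbv zeta in K.
    rewrite Rmin_left, Rmax_right in K by lra.
    destruct K as [c [_ Hc]].
    - intros x Hx. apply dphi. lra.
    - intros x Hx. apply continuity_pt_filterlim. apply contphi.
    - unfold phi in Hc. rewrite (clamp_id 0), G0 in Hc by lra. rewrite (clamp_id r) in Hc by lra.
      pose proof (exp_pos (2 * H r)). nra. }
  assert (key : forall x, 0 <= St x ^ 2 + INR d * lam).
  { intros x. pose proof (Gz _ (clamp_in x)) as Gx. unfold G in Gx.
    pose proof (CS d (fun i => L i (clamp x)) ltac:(lia)) as C.
    assert (C' : St x ^ 2 <= INR d * Q (clamp x)) by exact C. clear C. rename C' into C.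
    change (S (clamp x)) with (St x) in Gx.
    assert (Hq : Q (clamp x) = St x ^ 2 + (INR d - 1) * lam) by lra.
    rewrite Hq in C.
    assert (0 <= (INR d - 1) * (St x ^ 2 + INR d * lam)) by nra.
    nra. }
  set (D := sumR d Dc) in *.
  assert (HD : 0 <= D ^ 2 + INR d * lam).
  { destruct (Rle_lt_dec 0 (D ^ 2 + INR d * lam)) as [h|h]; auto. exfalso.
    set (c := - (INR d * lam)).
    assert (cpos : D ^ 2 < c) by (unfold c; lra).
    assert (c0 : 0 < c) by (pose proof (pow2_ge_0 D); lra).
    assert (keyc : forall x, c <= St x ^ 2) by (intros x; specialize (key x); unfold c; lra).
    assert (contSt' : continuity St) by (intros x; apply continuity_pt_filterlim; apply contSt).
    assert (nz : forall x, St x <> 0) by (intros x E; specialize (keyc x); rewrite E in keyc; simpl in keyc; lra).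
    assert (Hsq : sqrt c ^ 2 = c) by (simpl; rewrite Rmult_1_r; apply sqrt_sqrt; lra).
    pose proof (sqrt_pos c) as sc.
    destruct (Rlt_or_le 0 (St 0)) as [p|p].
    - assert (pos : forall x, 0 < x < 1 -> sqrt c <= St x).
      { intros x Hx. assert (sp : 0 < St x).
        { destruct (Rlt_or_le 0 (St x)) as [q|q]; auto. exfalso.
          destruct (IVT_gen St 0 x 0 contSt') as [z [_ Hz]].
          - rewrite Rmin_right, Rmax_left by lra. lra.
          - exact (nz z Hz). }
        specialize (keyc x). nra. }
      pose proof (is_RInt_le (fun _ => sqrt c) St 0 1 _ _ ltac:(lra) (is_RInt_const (V:=R_NormedModule) 0 1 (sqrt c)) intSt pos) as I.
      unfold scal in I; simpl in I; unfold mult in I; simpl in I.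
      nra.
    - assert (p' : St 0 < 0) by (pose proof (nz 0); lra).
      assert (neg : forall x, 0 < x < 1 -> St x <= - sqrt c).
      { intros x Hx. assert (sp : St x < 0).
        { destruct (Rlt_or_le (St x) 0) as [q|q]; auto. exfalso.
          destruct (IVT_gen St 0 x 0 contSt') as [z [_ Hz]].
          - rewrite Rmin_left, Rmax_right by lra. lra.
          - exact (nz z Hz). }
        specialize (keyc x). nra. }
      pose proof (is_RInt_le St (fun _ => - sqrt c) 0 1 _ _ ltac:(lra) intSt (is_RInt_const (V:=R_NormedModule) 0 1 (- sqrt c)) neg) as I.
      unfold scal in I; simpl in I; unfold mult in I; simpl in I.
      nra. }
  apply Rmult_le_reg_l with (INR d); auto.
  replace (INR d * (- D ^ 2 / INR d)) with (- D ^ 2) by (field; lra). lra.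
Qed.
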